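(* (1) The mapping $F\colon(\mathcal{H}\times\mathcal{H})\setminus\Delta\to T^*\mathcal{H}$ defined by \begin{equation} F(p,q)=(q,\alpha_{(p,q)}) \end{equation} provides a diffeomorphism between $(\mathcal{H}\times\mathcal{H})\setminus\Delta$ and $T^*\mathcal{H}\setminus 0_\mathcal{H}$, where $0_\mathcal{H}$ denotes the zero section. (2) The real part of $\Omega_{\mathcal{H}}$ is equal to the pullback of the canonical symplectic form on $T^*\mathcal{H}$ by $F$.
   Context: $\mathcal{H}=\mathbb{C}\times\mathbb{R}$ is the 3-dimensional Heisenberg group with coordinates $(z,u)=(x,y,u)$ and group law $(z,u)\cdot(z',u')=(z+z',u+u'-\tfrac{1}{2}\Im(z\overline{z'}))$; $\Delta$ is the diagonal of $\mathcal{H}\times\mathcal{H}$. For $p=(z,u)$ let $A(p)=|z|^2-4iu$, and $\rho(p,q)=A(p^{-1}q)$. Define the complex 2-form $\Omega_{\mathcal{H}}=d_pd_q\log\rho$ and the real 1-form $\alpha=\Re d_q\log\rho$ on $(\mathcal{H}\times\mathcal{H})\setminus\Delta$ (here $d_p,d_q$ are exterior derivatives in the first and second factors); for fixed $p$, $\alpha_{(p,\cdot)}$ is a 1-form on $\mathcal{H}\setminus\{p\}$, so $\alpha_{(p,q)}\in T^*_q\mathcal{H}$. *)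

(* Defs.v *)
From HB Require Import structures.
From mathcomp Require Import all_boot all_order all_algebra.
From mathcomp Require Import all_classical all_reals all_analysis.
Set Implicit Arguments. Unset Strict Implicit. Unset Printing Implicit Defensive.
Import Order.TTheory GRing.Theory Num.Theory.
Import numFieldNormedType.Exports.
Local Open Scope classical_set_scope.
Local Open Scope ring_scope.

Section Heisenberg.
Variable R : realType.

Definition cplx := (R * R)%type.
Definition cmul (a b : cplx) : cplx := (a.1 * b.1 - a.2 * b.2, a.1 * b.2 + a.2 * b.1).
Definition cdiv (a b : cplx) : cplx :=
  ((a.1 * b.1 + a.2 * b.2) / (b.1 ^+ 2 + b.2 ^+ 2),
   (a.2 * b.1 - a.1 * b.2) / (b.1 ^+ 2 + b.2 ^+ 2)).
Definition cRe (a : cplx) : R := a.1.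
Definition cIm (a : cplx) : R := a.2.

(** The Heisenberg group H = C x R, point (z,u) = ((x,y),u). *)
Definition heis := (cplx * R)%type.
(* (z,u).(z',u') = (z+z', u+u' - 1/2 Im(z conj z')) *)
Definition hmul (p q : heis) : heis :=
  ((p.1.1 + q.1.1, p.1.2 + q.1.2),
   p.2 + q.2 - 2^-1 * cIm (cmul p.1 (q.1.1, - q.1.2))).
Definition hinv (p : heis) : heis := ((- p.1.1, - p.1.2), - p.2).
Definition Afun (p : heis) : cplx := (p.1.1 ^+ 2 + p.1.2 ^+ 2, - (4 * p.2)).
Definition rho (p q : heis) : cplx := Afun (hmul (hinv p) q).

(** Coordinates on H x H = R^6 : (x,y,u) of p are entries 0,1,2 and
    (x',y',u') of q are entries 3,4,5 of a row vector in 'rV[R]_6.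
    The same row-vector type models T*H = H x R^3 : entries 0,1,2 are the
    base point q = (x,y,u), entries 3,4,5 the covector components in the
    basis dx, dy, du. *)
Definition pt6 := 'rV[R]_6.
Definition c6 (i : nat) : 'I_6 := inord i.
Definition first (X : pt6) : heis := ((X 0 (c6 0), X 0 (c6 1)), X 0 (c6 2)).
Definition second (X : pt6) : heis := ((X 0 (c6 3), X 0 (c6 4)), X 0 (c6 5)).
Definition mk6 (a b : heis) : pt6 :=
  \row_(k < 6) [:: a.1.1; a.1.2; a.2; b.1.1; b.1.2; b.2]`_k.
Definition e6 (k : nat) : pt6 := \row_(l < 6) (if (l : nat) == k then 1 else 0).

Definition offdiag : set pt6 := [set X | first X <> second X].
Definition nonzero_cov : set pt6 :=
  [set Y | Y 0 (c6 3) <> 0 \/ Y 0 (c6 4) <> 0 \/ Y 0 (c6 5) <> 0].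

Definition rho6 (X : pt6) : cplx := rho (first X) (second X).

Definition cpartial (f : pt6 -> cplx) (k : nat) (X : pt6) : cplx :=
  ('D_(e6 k) (fun Y => cRe (f Y)) X, 'D_(e6 k) (fun Y => cIm (f Y)) X).

(** j-th component (j = 0,1,2 for dx', dy', du') of d_q log rho
    = (d_q rho) / rho. *)
Definition dqlog (j : nat) (X : pt6) : cplx := cdiv (cpartial rho6 (3 + j) X) (rho6 X).

Definition alpha (j : nat) (X : pt6) : R := cRe (dqlog j X).

(** Omega_H = d_p d_q log rho = sum_{i,j} Omega_ij dp_i /\ dq_j,
    Omega_ij = d/dp_i ( d_q log rho )_j. *)
Definition OmegaCoef (i j : nat) (X : pt6) : cplx := cpartial (dqlog j) i X.

Definition ReOmega (X a b : pt6) : R :=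
  \sum_(i < 3) \sum_(j < 3)
     cRe (OmegaCoef i j X) *
       (a 0 (c6 i) * b 0 (c6 (3 + j)) - b 0 (c6 i) * a 0 (c6 (3 + j))).

Definition Fmap (X : pt6) : pt6 :=
  mk6 (second X) ((alpha 0 X, alpha 1 X), alpha 2 X).

(** Canonical symplectic form on T*H = d(theta), theta = sum xi_j dq_j,
    i.e. omega = sum_j dxi_j /\ dq_j, at any point, on vectors c d. *)
Definition omega_can (c d : pt6) : R :=
  \sum_(j < 3) (c 0 (c6 (3 + j)) * d 0 (c6 j) - d 0 (c6 (3 + j)) * c 0 (c6 j)).

End Heisenberg.

Fixpoint Ck (R : realType) (V W : normedModType R) (k : nat) (U : set V) (f : V -> W)
  {struct k} : Prop :=
  match k with
  | 0 => forall x, U x -> {for x, continuous f}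
  | k'.+1 => (forall x, U x -> differentiable f x) /\
             (forall v : V, Ck k' U (fun x => 'D_v f x))
  end.

Definition smooth_on (R : realType) (V W : normedModType R) (U : set V) (f : V -> W) :=
  forall k, Ck k U f.

(* Main.v *)
Require Import Defs.
From HB Require Import structures.
From mathcomp Require Import all_boot all_order all_algebra.
From mathcomp Require Import all_classical all_reals all_analysis.
From mathcomp Require Import ring lra.
Set Implicit Arguments. Unset Strict Implicit. Unset Printing Implicit Defensive.
Import Order.TTheory GRing.Theory Num.Theory.
Import numFieldNormedType.Exports.
Local Open Scope classical_set_scope.
Local Open Scope ring_scope.

Ltac side h := move: h; apply: contra => /eqP ?; apply/eqP; lra.

Section Gen.
Variables (R : realType) (V W : normedModType R).

Lemma diff_near0 (h : V -> W) x : (\forall y \near x, h y = 0) -> differentiable h x.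
Proof.
move=> hx.
have hx0 : h x = 0 by exact: (nbhs_singleton hx).
have H : continuous (\0 : V -> W) /\ h \o shift x = cst (h x) + \0 +o_ 0 id.
  split; first exact: cst_continuous.
  apply/eqaddoE; rewrite funeqE => y /=; rewrite hx0 !add0r.
  rewrite littleoE //.
  move=> _/posnumP[eps].
  have : \forall z \near (0:V), h (z + x) = 0.
    by move: hx; rewrite (near_shift 0) /= subr0.
  apply: filterS => z /= ->; rewrite normr0 mulr_ge0 //.
have dh : 'd h x = \0 :> (V -> W) by apply/diff_unique; case: H.
by apply/diff_locallyP; rewrite dh.
Qed.

Lemma diff_near (f g : V -> W) x : (\forall y \near x, f y = g y) ->
  differentiable g x -> differentiable f x.
Proof.
move=> fg dg.
have -> : f = g + (f - g) by apply/funext => y /=; rewrite addrC subrK.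
apply: differentiableD => //; apply: diff_near0.
apply: filterS fg => y fgy. change (f y - g y = 0); by rewrite fgy subrr.
Qed.
End Gen.

Section Ex.
Variable R : realType.
Local Notation P6 := (pt6 R).

Inductive ex : Type := EV of nat | EC of R | EAdd of ex & ex | EMul of ex & ex
  | EOpp of ex | EInv of ex.

Fixpoint ev (e : ex) (X : P6) : R :=
  match e with
  | EV i => X 0 (c6 i)
  | EC c => c
  | EAdd a b => ev a X + ev b X
  | EMul a b => ev a X * ev b X
  | EOpp a => - ev a X
  | EInv a => (ev a X)^-1
  end.

Fixpoint defd (e : ex) (X : P6) : Prop :=
  match e with
  | EV _ | EC _ => True
  | EAdd a b | EMul a b => defd a X /\ defd b X
  | EOpp a => defd a X
  | EInv a => ev a X != 0 /\ defd a X
  end.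

Fixpoint dr (e : ex) (v : P6) : ex :=
  match e with
  | EV i => EC (v 0 (c6 i))
  | EC _ => EC 0
  | EAdd a b => EAdd (dr a v) (dr b v)
  | EMul a b => EAdd (EMul (dr a v) b) (EMul a (dr b v))
  | EOpp a => EOpp (dr a v)
  | EInv a => EOpp (EMul (dr a v) (EMul (EInv a) (EInv a)))
  end.

Lemma defd_dr e v X : defd e X -> defd (dr e v) X.
Proof. elim: e => //=; intros; tauto. Qed.

Lemma ev_diff e X : defd e X -> differentiable (ev e) X.
Proof.
elim: e => /= [i|c|a IHa b IHb|a IHa b IHb|a IHa|a IHa].
- move=> _; exact: differentiable_coord.
- move=> _; exact: differentiable_cst.
- by case=> da db; apply: differentiableD; [exact: IHa|exact: IHb].
- by case=> da db; apply: differentiableM; [exact: IHa|exact: IHb].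
- by move=> da; apply: differentiableN; exact: IHa.
- by case=> nz da; apply: differentiableV => //; exact: IHa.
Qed.

Lemma ev_derive e X v : defd e X -> 'D_v (ev e) X = ev (dr e v) X.
Proof.
elim: e => /= [i|c|a IHa b IHb|a IHa b IHb|a IHa|a IHa].
- move=> _.
  have dI : derivable (@id P6) X v by exact: derivable_id.
  have := @derive_mx _ _ 1 6 id X v dI => /(congr1 (fun M : 'M[R]_(1,6) => M 0 (c6 i))).
  by rewrite derive_id mxE.
- by move=> _; exact: derive_cst.
- case=> da db; rewrite deriveD ?IHa ?IHb //; exact/diff_derivable/ev_diff.
- case=> da db; rewrite deriveM ?IHa ?IHb //; try exact/diff_derivable/ev_diff.
  by transitivity (ev a X * ev (dr b v) X + ev b X * ev (dr a v) X); [by []|ring].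
- move=> da; rewrite deriveN ?IHa //; exact/diff_derivable/ev_diff.
- case=> nz da; rewrite deriveV ?IHa //; last exact/diff_derivable/ev_diff.
  by transitivity (- (ev a X)^-2 * ev (dr a v) X); [by []|rewrite expr2 invfM; ring].
Qed.

Definition rowf (g : nat -> ex) : P6 -> P6 := fun X => \row_(k < 6) ev (g k) X.

Lemma rowf_diff g X : (forall k, (k < 6)%N -> defd (g k) X) -> differentiable (rowf g) X.
Proof.
move=> dg.
have -> : rowf g = \sum_(k < 6) (fun Y => ev (g k) Y *: (delta_mx 0 k : P6)).
  rewrite fct_sumE; apply/funext => Y; rewrite [LHS]row_sum_delta.
  by apply: eq_bigr => k _; rewrite mxE.
apply: differentiable_sum => k; apply: differentiableZl.
by apply: ev_diff; apply: dg.
Qed.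

Lemma rowf_derive g X v : (forall k, (k < 6)%N -> defd (g k) X) ->
  'D_v (rowf g) X = rowf (fun k => dr (g k) v) X.
Proof.
move=> dg; rewrite derive_mx; last exact/diff_derivable/rowf_diff.
apply/matrixP => i j; rewrite !mxE.
have -> : (fun t => rowf g t i j) = ev (g j) by apply/funext => t; rewrite mxE.
by apply: ev_derive; apply: dg.
Qed.

Definition Sm (U : set P6) (F : P6 -> P6) := exists g : nat -> ex,
  (forall k X, (k < 6)%N -> U X -> defd (g k) X) /\ (forall X, U X -> F X = rowf g X).

Lemma Sm_Ck U F : open U -> Sm U F -> forall k, Ck k U F.
Proof.
move=> oU sF k; elim: k F sF => [|k IH] F [g [dg Fg]] /=.
- move=> x Ux; apply: differentiable_continuous.
  apply: (@diff_near _ _ _ _ (rowf g)); last by apply: rowf_diff => j hj; exact: dg.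
  apply: filterS (open_nbhs_nbhs (conj oU Ux)) => y; exact: Fg.
- split.
  + move=> x Ux.
    apply: (@diff_near _ _ _ _ (rowf g)); last by apply: rowf_diff => j hj; exact: dg.
    apply: filterS (open_nbhs_nbhs (conj oU Ux)) => y; exact: Fg.
  + move=> v; apply: IH; exists (fun j => dr (g j) v); split.
      by move=> j X hj UX; apply: defd_dr; exact: dg.
    move=> X UX; rewrite (@near_eq_derive _ _ _ F (rowf g)).
      by apply: rowf_derive => j hj; exact: dg.
    apply: filterS (open_nbhs_nbhs (conj oU UX)) => y; exact: Fg.
Qed.
End Ex.

Section Alg.
Variable R : realFieldType.
Implicit Types x y u a b c : R.

Definition fX1 x x' : R := x' - x.
Definition fW x y u x' y' u' : R := u' - u - (x * y' - y * x') / 2.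
Definition fS X1 Y1 : R := X1 * X1 + Y1 * Y1.
Definition fN X1 Y1 W : R := fS X1 Y1 * fS X1 Y1 + 16 * (W * W).
Definition al0 X1 Y1 W y : R := (2 * X1 * fS X1 Y1 + 8 * y * W) / fN X1 Y1 W.
Definition al1 X1 Y1 W x : R := (2 * Y1 * fS X1 Y1 - 8 * x * W) / fN X1 Y1 W.
Definition al2 X1 Y1 W : R := 16 * W / fN X1 Y1 W.
Definition ba1 x' y' a b c : R := a - c * y' / 2.
Definition ba2 x' y' a b c : R := b + c * x' / 2.
Definition bD a1 a2 t : R := (a1 * a1 + a2 * a2) * (a1 * a1 + a2 * a2) + t * t.
Definition bX1 a1 a2 t : R := 2 * (a1 * (a1 * a1 + a2 * a2) + a2 * t) / bD a1 a2 t.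
Definition bY1 a1 a2 t : R := 2 * (a2 * (a1 * a1 + a2 * a2) - a1 * t) / bD a1 a2 t.
Definition bW a1 a2 t : R := t / bD a1 a2 t.

Lemma fN_eq0 X1 Y1 W : (fN X1 Y1 W == 0) = [&& X1 == 0, Y1 == 0 & W == 0].
Proof.
rewrite /fN /fS; apply/idP/idP.
- move=> /eqP h.
  have hS : X1 * X1 + Y1 * Y1 = 0 by nra.
  have hW : W = 0 by nra.
  have hX : X1 = 0 by nra.
  have hY : Y1 = 0 by nra.
  by rewrite hX hY hW !eqxx.
- by case/and3P => /eqP -> /eqP -> /eqP ->; apply/eqP; ring.
Qed.

Lemma bD_eq0 a1 a2 t : (bD a1 a2 t == 0) = [&& a1 == 0, a2 == 0 & t == 0].
Proof.
rewrite /bD; apply/idP/idP.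
- move=> /eqP h.
  have hS : a1 * a1 + a2 * a2 = 0 by nra.
  have hW : t = 0 by nra.
  have hX : a1 = 0 by nra.
  have hY : a2 = 0 by nra.
  by rewrite hX hY hW !eqxx.
- by case/and3P => /eqP -> /eqP -> /eqP ->; apply/eqP; ring.
Qed.

Section Fwd.
Variables (x y W x' y' : R).
Let X1 := x' - x.
Let Y1 := y' - y.
Hypothesis hN : fN X1 Y1 W != 0.
Let a1 := ba1 x' y' (al0 X1 Y1 W y) (al1 X1 Y1 W x) (al2 X1 Y1 W).
Let a2 := ba2 x' y' (al0 X1 Y1 W y) (al1 X1 Y1 W x) (al2 X1 Y1 W).
Let t := al2 X1 Y1 W.

Lemma a1E : a1 = (2 * X1 * fS X1 Y1 - 8 * Y1 * W) / fN X1 Y1 W.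
Proof. rewrite /a1 /ba1 /al0 /al2 /Y1; move: hN; rewrite /X1 /Y1 => hN'; field; exact: hN'. Qed.
Lemma a2E : a2 = (2 * Y1 * fS X1 Y1 + 8 * X1 * W) / fN X1 Y1 W.
Proof. rewrite /a2 /ba2 /al1 /al2 /X1; move: hN; rewrite /X1 /Y1 => hN'; field; exact: hN'. Qed.
Lemma c2E : a1 * a1 + a2 * a2 = 4 * fS X1 Y1 / fN X1 Y1 W.
Proof. rewrite a1E a2E; move: hN; rewrite /fN /fS => hN'; field; exact: hN'. Qed.
Lemma DE : bD a1 a2 t = 16 / fN X1 Y1 W.
Proof. rewrite /bD c2E /t /al2; move: hN; rewrite /fN => hN'; field; exact: hN'. Qed.
Lemma bX1E : bX1 a1 a2 t = X1.
Proof.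
rewrite /bX1 DE c2E a1E a2E /t /al2; move: hN; rewrite /fN /fS => hN'; field; exact: hN'.
Qed.
Lemma bY1E : bY1 a1 a2 t = Y1.
Proof.
rewrite /bY1 DE c2E a1E a2E /t /al2; move: hN; rewrite /fN /fS => hN'; field; exact: hN'.
Qed.
Lemma bWE : bW a1 a2 t = W.
Proof. rewrite /bW DE /t /al2; move: hN; rewrite /fN /fS => hN'; field; exact: hN'. Qed.
End Fwd.

Section Bwd.
Variables (x' y' a b c : R).
Let a1 := ba1 x' y' a b c.
Let a2 := ba2 x' y' a b c.
Hypothesis hD : bD a1 a2 c != 0.
Let X1 := bX1 a1 a2 c.
Let Y1 := bY1 a1 a2 c.
Let W := bW a1 a2 c.

Lemma SbE : fS X1 Y1 = 4 * (a1 * a1 + a2 * a2) / bD a1 a2 c.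
Proof. rewrite /fS /X1 /Y1 /bX1 /bY1; move: hD; rewrite /bD => hD'; field; exact: hD'. Qed.
Lemma NbE : fN X1 Y1 W = 16 / bD a1 a2 c.
Proof. rewrite /fN SbE /W /bW; move: hD; rewrite /bD => hD'; field; exact: hD'. Qed.
Lemma al2E : al2 X1 Y1 W = c.
Proof. rewrite /al2 NbE /W /bW; move: hD; rewrite /bD => hD'; field; exact: hD'. Qed.
Lemma al0E : al0 X1 Y1 W (y' - Y1) = a.
Proof.
rewrite /al0 NbE SbE /W /bW /X1 /Y1 /bX1 /bY1; move: hD; rewrite /a1 /a2 /ba1 /ba2 /bD => hD'.
field. all: try exact: hD'. apply: contra hD' => /eqP h; apply/eqP; lra.
Qed.
Lemma al1E : al1 X1 Y1 W (x' - X1) = b.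
Proof.
rewrite /al1 NbE SbE /W /bW /X1 /Y1 /bX1 /bY1; move: hD; rewrite /a1 /a2 /ba1 /ba2 /bD => hD'.
field. all: try exact: hD'. apply: contra hD' => /eqP h; apply/eqP; lra.
Qed.
End Bwd.
End Alg.

Section C.
Variable R : realType.
Local Notation P6 := (pt6 R).
Local Notation ex := (ex R).

Lemma c6K i : (i < 6)%N -> nat_of_ord (c6 i) = i.
Proof. by move=> h; rewrite /c6 inordK. Qed.

Lemma ordE m (H : (m < 6)%N) : Ordinal H = c6 m.
Proof. by apply/val_inj; rewrite /= c6K. Qed.

Lemma eq6 (A B : P6) : (forall i, (i < 6)%N -> A 0 (c6 i) = B 0 (c6 i)) -> A = B.
Proof.
move=> h; apply/matrixP => i j; rewrite [i]ord1.
case: j => m hm; rewrite ordE; exact: h.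
Qed.

Lemma e6E k i : (i < 6)%N -> (e6 R k) 0 (c6 i) = if i == k then 1 else 0.
Proof. by move=> h; rewrite /e6 mxE c6K. Qed.

Definition eX1 : ex := EAdd (EOpp (EV _ 0)) (EV _ 3).
Definition eY1 : ex := EAdd (EOpp (EV _ 1)) (EV _ 4).
Definition eS : ex := EAdd (EMul eX1 eX1) (EMul eY1 eY1).
Definition eWW : ex := EAdd (EAdd (EOpp (EV _ 2)) (EV _ 5))
  (EOpp (EMul (EC 2^-1) (EAdd (EMul (EOpp (EV _ 0)) (EOpp (EV _ 4))) (EMul (EOpp (EV _ 1)) (EV _ 3))))).
Definition eI : ex := EOpp (EMul (EC 4) eWW).
Definition eNN : ex := EAdd (EMul eS eS) (EMul eI eI).
Definition ea (j : nat) : ex :=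
  EMul (EAdd (EMul (dr eS (e6 R (3 + j))) eS) (EMul (dr eI (e6 R (3 + j))) eI)) (EInv eNN).

Lemma reE X : cRe (rho6 X) = ev eS X.
Proof. by rewrite /rho6 /rho /Afun /hmul /hinv /cRe /= !expr2. Qed.
Lemma imE X : cIm (rho6 X) = ev eI X.
Proof. by rewrite /rho6 /rho /Afun /hmul /hinv /cIm /cmul /=; ring. Qed.

Lemma alphaE j X : alpha j X = ev (ea j) X.
Proof.
rewrite /alpha /dqlog /cpartial.
have -> : (fun Y => cRe (rho6 Y)) = ev eS by apply/funext => Y; exact: reE.
have -> : (fun Y => cIm (rho6 Y)) = ev eI by apply/funext => Y; exact: imE.
rewrite !ev_derive //.
Qed.

Definition cx (X : P6) i := X 0 (c6 i).
Definition fWX (X : P6) := fW (cx X 0) (cx X 1) (cx X 2) (cx X 3) (cx X 4) (cx X 5).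
Definition fNX (X : P6) := fN (cx X 3 - cx X 0) (cx X 4 - cx X 1) (fWX X).

Lemma NNE X : ev eNN X = fNX X.
Proof. rewrite /= /fNX /fN /fS /fWX /fW /cx. by field. Qed.


Lemma alpha0E X : fNX X != 0 ->
  alpha 0 X = al0 (cx X 3 - cx X 0) (cx X 4 - cx X 1) (fWX X) (cx X 1).
Proof.
move=> h; rewrite alphaE /= !e6E //=.
move: h; rewrite /al0 /fNX /fN /fS /fWX /fW /cx => h.
field; side h.
Qed.
Lemma alpha1E X : fNX X != 0 ->
  alpha 1 X = al1 (cx X 3 - cx X 0) (cx X 4 - cx X 1) (fWX X) (cx X 0).
Proof.
move=> h; rewrite alphaE /= !e6E //=.
move: h; rewrite /al1 /fNX /fN /fS /fWX /fW /cx => h.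
field; side h.
Qed.
Lemma alpha2E X : fNX X != 0 ->
  alpha 2 X = al2 (cx X 3 - cx X 0) (cx X 4 - cx X 1) (fWX X).
Proof.
move=> h; rewrite alphaE /= !e6E //=.
move: h; rewrite /al2 /fNX /fN /fS /fWX /fW /cx => h.
field; side h.
Qed.

Lemma offdiagE X : offdiag X <-> fNX X != 0.
Proof.
rewrite /offdiag /fNX fN_eq0 /first /second /fWX /fW /cx /=; split.
- move=> h; apply/negP => /and3P[/eqP h1 /eqP h2 /eqP h3]; apply: h.
  have e1 : X 0 (c6 0) = X 0 (c6 3) by lra.
  have e2 : X 0 (c6 1) = X 0 (c6 4) by lra.
  rewrite -e1 -e2 in h3 *; congr (_, _); lra.
- move=> h [e1 e2 e3]; move/negP: h; apply; rewrite e1 e2 e3.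
  by apply/and3P; split; apply/eqP; ring.
Qed.

Definition bDY (Y : P6) := bD (ba1 (cx Y 0) (cx Y 1) (cx Y 3) (cx Y 4) (cx Y 5))
   (ba2 (cx Y 0) (cx Y 1) (cx Y 3) (cx Y 4) (cx Y 5)) (cx Y 5).

Lemma ncovE Y : nonzero_cov Y <-> bDY Y != 0.
Proof.
rewrite /nonzero_cov /bDY bD_eq0 /ba1 /ba2 /cx; split.
- move=> h; apply/negP => /and3P[/eqP h1 /eqP h2 /eqP h3].
  rewrite h3 in h1 h2; move: h1 h2; rewrite !mul0r ?mul0r !subr0 ?addr0 => h1 h2.
  by case: h => [|[]]; [rewrite h1|rewrite h2|rewrite h3].
- move=> h.
  have [h3|h3] := eqVneq (Y 0 (c6 5)) 0; last by right; right; apply/eqP.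
  have [h1|h1] := eqVneq (Y 0 (c6 3)) 0; last by left; apply/eqP.
  have [h2|h2] := eqVneq (Y 0 (c6 4)) 0; last by right; left; apply/eqP.
  exfalso; move/negP: h; apply; rewrite h1 h2 h3.
  by apply/and3P; split; apply/eqP; ring.
Qed.

Definition gF (k : nat) : ex := nth (EC 0) [:: EV _ 3; EV _ 4; EV _ 5; ea 0; ea 1; ea 2] k.

Lemma FmapE X : Fmap X = rowf gF X.
Proof.
apply: eq6 => i hi; rewrite /Fmap /mk6 /rowf !mxE c6K //.
by case: i hi => [|[|[|[|[|[|//]]]]]] _ /=; rewrite ?alphaE.
Qed.

Lemma cxF X i : (i < 6)%N -> cx (Fmap X) i =
  nth 0 [:: cx X 3; cx X 4; cx X 5; alpha 0 X; alpha 1 X; alpha 2 X] i.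
Proof. by move=> hi; rewrite /cx /Fmap /mk6 mxE c6K. Qed.

Definition ea1 : ex := EAdd (EV _ 3) (EOpp (EMul (EMul (EV _ 5) (EV _ 1)) (EC 2^-1))).
Definition ea2 : ex := EAdd (EV _ 4) (EMul (EMul (EV _ 5) (EV _ 0)) (EC 2^-1)).
Definition ec2 : ex := EAdd (EMul ea1 ea1) (EMul ea2 ea2).
Definition eDD : ex := EAdd (EMul ec2 ec2) (EMul (EV _ 5) (EV _ 5)).
Definition eBX1 : ex := EMul (EMul (EC 2) (EAdd (EMul ea1 ec2) (EMul ea2 (EV _ 5)))) (EInv eDD).
Definition eBY1 : ex :=
  EMul (EMul (EC 2) (EAdd (EMul ea2 ec2) (EOpp (EMul ea1 (EV _ 5))))) (EInv eDD).
Definition eBW : ex := EMul (EV _ 5) (EInv eDD).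
Definition egx : ex := EAdd (EV _ 0) (EOpp eBX1).
Definition egy : ex := EAdd (EV _ 1) (EOpp eBY1).
Definition egu : ex := EAdd (EAdd (EV _ 2) (EOpp eBW))
  (EOpp (EMul (EAdd (EMul egx (EV _ 1)) (EOpp (EMul egy (EV _ 0)))) (EC 2^-1))).
Definition gG (k : nat) : ex := nth (EC 0) [:: egx; egy; egu; EV _ 0; EV _ 1; EV _ 2] k.
Definition Gm : P6 -> P6 := rowf gG.

Definition A1 (Y : P6) := ba1 (cx Y 0) (cx Y 1) (cx Y 3) (cx Y 4) (cx Y 5).
Definition A2 (Y : P6) := ba2 (cx Y 0) (cx Y 1) (cx Y 3) (cx Y 4) (cx Y 5).

Lemma DDE Y : ev eDD Y = bDY Y.
Proof. by []. Qed.

Lemma cxG Y i : (i < 6)%N -> cx (Gm Y) i =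
  nth 0 [:: cx Y 0 - bX1 (A1 Y) (A2 Y) (cx Y 5); cx Y 1 - bY1 (A1 Y) (A2 Y) (cx Y 5);
   cx Y 2 - bW (A1 Y) (A2 Y) (cx Y 5) -
     ((cx Y 0 - bX1 (A1 Y) (A2 Y) (cx Y 5)) * cx Y 1 -
      (cx Y 1 - bY1 (A1 Y) (A2 Y) (cx Y 5)) * cx Y 0) / 2;
   cx Y 0; cx Y 1; cx Y 2] i.
Proof.
move=> hi; rewrite /cx /Gm /rowf mxE c6K //.
by case: i hi => [|[|[|[|[|[|//]]]]]] _.
Qed.

Lemma F_ncov X : @offdiag R X -> @nonzero_cov R (Fmap X).
Proof.
move=> /offdiagE h; apply/ncovE.
rewrite /bDY !cxF // /= alpha0E // alpha1E // alpha2E //.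
rewrite DE; last exact: h.
by rewrite mulf_neq0 // invr_neq0.
Qed.

Lemma G_off Y : @nonzero_cov R Y -> @offdiag R (Gm Y).
Proof.
move=> /ncovE h; apply/offdiagE.
rewrite /fNX /fWX !cxG //=.
set b1 := bX1 _ _ _; set b2 := bY1 _ _ _; set bw := bW _ _ _.
have -> : cx Y 0 - (cx Y 0 - b1) = b1 by ring.
have -> : cx Y 1 - (cx Y 1 - b2) = b2 by ring.
have -> : fW (cx Y 0 - b1) (cx Y 1 - b2)
   (cx Y 2 - bw - ((cx Y 0 - b1) * cx Y 1 - (cx Y 1 - b2) * cx Y 0) / 2)
   (cx Y 0) (cx Y 1) (cx Y 2) = bw by rewrite /fW; ring.
rewrite /b1 /b2 /bw NbE; last exact: h.
by rewrite mulf_neq0 // invr_neq0.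
Qed.

Lemma GF X : @offdiag R X -> Gm (Fmap X) = X.
Proof.
move=> /offdiagE h; apply: eq6 => i hi.
rewrite -[Gm _ 0 _]/(cx _ i) -[X 0 _]/(cx X i) cxG // /A1 /A2 !cxF //= .
rewrite alpha0E // alpha1E // alpha2E //.
have h' : fN (cx X 3 - cx X 0) (cx X 4 - cx X 1) (fWX X) != 0 by [].
rewrite (bX1E h') (bY1E h') (bWE h').
case: i hi => [|[|[|[|[|[|//]]]]]] _ /=; rewrite /fWX /fW; ring.
Qed.

Lemma FG Y : @nonzero_cov R Y -> Fmap (Gm Y) = Y.
Proof.
move=> hY; have hG := G_off hY; move/offdiagE: hG => hG; move/ncovE: hY => hY.
apply: eq6 => i hi.
rewrite -[Fmap _ 0 _]/(cx _ i) -[Y 0 _]/(cx Y i) cxF //.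
case: i hi => [|[|[|[|[|[|//]]]]]] _ /=; rewrite ?cxG //=.
- rewrite alpha0E // /fWX !cxG //=.
  set b1 := bX1 _ _ _; set b2 := bY1 _ _ _; set bw := bW _ _ _.
  have -> : cx Y 0 - (cx Y 0 - b1) = b1 by ring.
  have -> : cx Y 1 - (cx Y 1 - b2) = b2 by ring.
  have -> : fW (cx Y 0 - b1) (cx Y 1 - b2)
     (cx Y 2 - bw - ((cx Y 0 - b1) * cx Y 1 - (cx Y 1 - b2) * cx Y 0) / 2)
     (cx Y 0) (cx Y 1) (cx Y 2) = bw by rewrite /fW; ring.
  by rewrite /b1 /b2 /bw al0E.
- rewrite alpha1E // /fWX !cxG //=.
  set b1 := bX1 _ _ _; set b2 := bY1 _ _ _; set bw := bW _ _ _.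
  have -> : cx Y 0 - (cx Y 0 - b1) = b1 by ring.
  have -> : cx Y 1 - (cx Y 1 - b2) = b2 by ring.
  have -> : fW (cx Y 0 - b1) (cx Y 1 - b2)
     (cx Y 2 - bw - ((cx Y 0 - b1) * cx Y 1 - (cx Y 1 - b2) * cx Y 0) / 2)
     (cx Y 0) (cx Y 1) (cx Y 2) = bw by rewrite /fW; ring.
  by rewrite /b1 /b2 /bw al1E.
- rewrite alpha2E // /fWX !cxG //=.
  set b1 := bX1 _ _ _; set b2 := bY1 _ _ _; set bw := bW _ _ _.
  have -> : cx Y 0 - (cx Y 0 - b1) = b1 by ring.
  have -> : cx Y 1 - (cx Y 1 - b2) = b2 by ring.
  have -> : fW (cx Y 0 - b1) (cx Y 1 - b2)
     (cx Y 2 - bw - ((cx Y 0 - b1) * cx Y 1 - (cx Y 1 - b2) * cx Y 0) / 2)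
     (cx Y 0) (cx Y 1) (cx Y 2) = bw by rewrite /fW; ring.
  by rewrite /b1 /b2 /bw al2E.
Qed.

Lemma open_ev (e : ex) : (forall X, defd e X) -> open [set X : P6 | ev e X != 0].
Proof.
move=> de.
have -> : [set X : P6 | ev e X != 0] = ev e @^-1` [set r : R | r != 0] by [].
apply: open_comp; last exact: open_neq.
move=> X _; apply: differentiable_continuous; exact: ev_diff.
Qed.

Lemma offdiag_open : open (@offdiag R).
Proof.
have -> : @offdiag R = [set X : P6 | ev eNN X != 0].
  apply/seteqP; split => X hX.
    by change (ev eNN X != 0); rewrite NNE; exact/offdiagE.
  by apply/offdiagE; rewrite -NNE.
by apply: open_ev => X /=; repeat split.
Qed.

Lemma ncov_open : open (@nonzero_cov R).
Proof.
have -> : @nonzero_cov R = [set X : P6 | ev eDD X != 0].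
  apply/seteqP; split => X hX.
    by change (ev eDD X != 0); rewrite DDE; exact/ncovE.
  by apply/ncovE; rewrite -DDE.
by apply: open_ev => X /=; repeat split.
Qed.

Lemma Fmap_smooth : smooth_on (@offdiag R) (@Fmap R).
Proof.
move=> k; apply: Sm_Ck; first exact: offdiag_open.
exists gF; split; last by move=> X _; exact: FmapE.
move=> j X hj /offdiagE hX; rewrite -NNE in hX.
by case: j hj => [|[|[|[|[|[|//]]]]]] _ //=; repeat split.
Qed.

Lemma Gm_smooth : smooth_on (@nonzero_cov R) Gm.
Proof.
move=> k; apply: Sm_Ck; first exact: ncov_open.
exists gG; split; last by [].
move=> j X hj /ncovE hX; rewrite -DDE in hX.
by case: j hj => [|[|[|[|[|[|//]]]]]] _ //=; repeat split.
Qed.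
End C.

Section D.
Variable R : realType.
Local Notation P6 := (pt6 R).

Lemma sym01 (X : P6) : fNX X != 0 ->
  ev (dr (ea R 1) (e6 R 3)) X = ev (dr (ea R 0) (e6 R 4)) X.
Proof.
move=> h; rewrite /= !e6E //=.
move: h; rewrite /fNX /fN /fS /fWX /fW /cx => h.
field; side h.
Qed.

Lemma sym02 (X : P6) : fNX X != 0 ->
  ev (dr (ea R 2) (e6 R 3)) X = ev (dr (ea R 0) (e6 R 5)) X.
Proof.
move=> h; rewrite /= !e6E //=.
move: h; rewrite /fNX /fN /fS /fWX /fW /cx => h.
field; side h.
Qed.
Lemma sym12 (X : P6) : fNX X != 0 ->
  ev (dr (ea R 2) (e6 R 4)) X = ev (dr (ea R 1) (e6 R 5)) X.
Proof.
move=> h; rewrite /= !e6E //=.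
move: h; rewrite /fNX /fN /fS /fWX /fW /cx => h.
field; side h.
Qed.

Lemma dr_lin (e : ex R) (v X : P6) : ev (dr e v) X =
  v 0 (c6 0) * ev (dr e (e6 R 0)) X + v 0 (c6 1) * ev (dr e (e6 R 1)) X +
  v 0 (c6 2) * ev (dr e (e6 R 2)) X + v 0 (c6 3) * ev (dr e (e6 R 3)) X +
  v 0 (c6 4) * ev (dr e (e6 R 4)) X + v 0 (c6 5) * ev (dr e (e6 R 5)) X.
Proof.
elim: e => /= [i|c|a IHa b IHb|a IHa b IHb|a IHa|a IHa].
- rewrite /e6 !mxE; move: (c6 i) => j.
  case: j => [[|[|[|[|[|[|//]]]]]] hj] /=; rewrite ordE ?c6K //=; ring.
- ring.
- rewrite IHa IHb; ring.
- rewrite IHa IHb; ring.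
- rewrite IHa; ring.
- rewrite IHa; ring.
Qed.

Lemma DFmap (X a : P6) : offdiag X -> 'D_a (@Fmap R) X = rowf (fun k => dr (gF R k) a) X.
Proof.
move=> hX; have -> : @Fmap R = rowf (gF R) by apply/funext => Y; exact: FmapE.
apply: rowf_derive => k hk; move/offdiagE: hX; rewrite -NNE => hX.
by case: k hk => [|[|[|[|[|[|//]]]]]] _ //=; repeat split.
Qed.

Lemma ReO i j (X : P6) : offdiag X -> (j < 3)%N ->
  cRe (OmegaCoef i j X) = ev (dr (ea R j) (e6 R i)) X.
Proof.
move=> hX hj; rewrite /OmegaCoef /cpartial /cRe /=.
have -> : (fun Y => (dqlog j Y).1) = ev (ea R j).
  by apply/funext => Y; rewrite -alphaE.
apply: ev_derive; move/offdiagE: hX; rewrite -NNE => hX.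
by case: j hj => [|[|[|//]]] _ //=; repeat split.
Qed.

Lemma abstract2 (d : nat -> nat -> R) (A B : nat -> R) :
  d 3 1 = d 4 0 -> d 3 2 = d 5 0 -> d 4 2 = d 5 1 ->
  \sum_(i < 3) \sum_(j < 3) d i j * (A i * B (3 + j)%N - B i * A (3 + j)%N) =
  \sum_(j < 3) ((A 0 * d 0 j + A 1 * d 1 j + A 2 * d 2 j + A 3 * d 3 j +
                 A 4 * d 4 j + A 5 * d 5 j) * B (3 + j)%N -
                (B 0 * d 0 j + B 1 * d 1 j + B 2 * d 2 j + B 3 * d 3 j +
                 B 4 * d 4 j + B 5 * d 5 j) * A (3 + j)%N).
Proof.
move=> h1 h2 h3; rewrite !big_ord_recr !big_ord0 /=.
rewrite -h1 -h2 -h3; ring.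
Qed.

Lemma rowfE (g : nat -> ex R) (X : P6) i : (i < 6)%N -> rowf g X 0 (c6 i) = ev (g i) X.
Proof. by move=> hi; rewrite /rowf mxE c6K. Qed.

Lemma RHSterm (X a b : P6) j : (j < 3)%N ->
  rowf (fun k => dr (gF R k) a) X 0 (c6 (3 + j)) * rowf (fun k => dr (gF R k) b) X 0 (c6 j) -
  rowf (fun k => dr (gF R k) b) X 0 (c6 (3 + j)) * rowf (fun k => dr (gF R k) a) X 0 (c6 j) =
  (a 0 (c6 0) * ev (dr (ea R j) (e6 R 0)) X + a 0 (c6 1) * ev (dr (ea R j) (e6 R 1)) X +
   a 0 (c6 2) * ev (dr (ea R j) (e6 R 2)) X + a 0 (c6 3) * ev (dr (ea R j) (e6 R 3)) X +
   a 0 (c6 4) * ev (dr (ea R j) (e6 R 4)) X + a 0 (c6 5) * ev (dr (ea R j) (e6 R 5)) X)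
   * b 0 (c6 (3 + j)) -
  (b 0 (c6 0) * ev (dr (ea R j) (e6 R 0)) X + b 0 (c6 1) * ev (dr (ea R j) (e6 R 1)) X +
   b 0 (c6 2) * ev (dr (ea R j) (e6 R 2)) X + b 0 (c6 3) * ev (dr (ea R j) (e6 R 3)) X +
   b 0 (c6 4) * ev (dr (ea R j) (e6 R 4)) X + b 0 (c6 5) * ev (dr (ea R j) (e6 R 5)) X)
   * a 0 (c6 (3 + j)).
Proof.
move=> hj.
have h3 : (3 + j < 6)%N by rewrite -[6%N]/(3 + 3)%N ltn_add2l.
have h6 : (j < 6)%N by apply: (ltn_trans hj).
rewrite !rowfE // -!dr_lin.
by case: j hj {h3 h6} => [|[|[|//]]] _.
Qed.

Lemma part2 (X : P6) : offdiag X -> forall a b : P6,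
  ReOmega X a b = omega_can ('D_a (@Fmap R) X) ('D_b (@Fmap R) X).
Proof.
move=> hX a b; rewrite /ReOmega /omega_can !DFmap //.
under eq_bigr => i _ do under eq_bigr => j _ do rewrite (ReO _ hX (ltn_ord j)).
under [in RHS]eq_bigr => j _ do rewrite (RHSterm _ _ _ (ltn_ord j)).
have hN := hX; move/offdiagE: hN => hN.
exact (@abstract2 (fun k j => ev (dr (ea R j) (e6 R k)) X)
   (fun i => a 0 (c6 i)) (fun i => b 0 (c6 i)) (sym01 hN) (sym02 hN) (sym12 hN)).
Qed.
End D.

Theorem proposition6p4 (R : realType) :
  (* (1) F is a diffeomorphism from (H x H) \ Delta onto T*H \ 0_H *)
  ((forall X, @offdiag R X -> @nonzero_cov R (Fmap X)) /\
   exists G : pt6 R -> pt6 R,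
     (forall Y, @nonzero_cov R Y -> @offdiag R (G Y)) /\
     (forall X, @offdiag R X -> G (Fmap X) = X) /\
     (forall Y, @nonzero_cov R Y -> Fmap (G Y) = Y) /\
     smooth_on (@offdiag R) (@Fmap R) /\
     smooth_on (@nonzero_cov R) G) /\
  (* (2) Re Omega_H = F^* omega_can *)
  (forall X, @offdiag R X -> forall a b : pt6 R,
     ReOmega X a b = omega_can ('D_a (@Fmap R) X) ('D_b (@Fmap R) X)).
Proof.
split; [split|].
- exact: F_ncov.
- exists (@Gm R); split; [exact: G_off|split; [exact: GF|split; [exact: FG|split]]].
  + exact: Fmap_smooth.
  + exact: Gm_smooth.
- exact: part2.
Qed.
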